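(* Let $F$ be a cumulative distribution function on $[0,\infty)$ that has a density $f$ and a finite mean, and suppose $\mathsf{OPT\text{-}GFT}(F)>0$. Let $B,S$ be independent with common distribution $F$, and let $p\sim F$ be drawn independently of $(B,S)$. Then \[\mathbb{E}_{p\sim F}\big[\mathsf{GFT}(p,F)\big]=\tfrac12\,\mathsf{OPT\text{-}GFT}(F)\] exactly, for every such $F$.
   Context: Symmetric bilateral trade: the buyer's value $B$ and the seller's value $S$ are independent draws from the same distribution $F$. A fixed-price mechanism posts a price $p$; trade occurs iff $B\ge p> S$ (for continuous $F$ the tie-breaking convention is immaterial). Gains from trade of price $p$: $\mathsf{GFT}(p,F)=\mathbb{E}[(B-S)\mathbf 1_{B\ge p>S}]$. Optimal gains from trade: $\mathsf{OPT\text{-}GFT}(F)=\mathbb{E}[(B-S)\mathbf 1_{B>S}]$. *)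

(* Defs.v *)
From mathcomp Require Import all_boot all_order all_algebra.
From mathcomp Require Import all_classical all_reals all_analysis.
Set Implicit Arguments. Unset Strict Implicit. Unset Printing Implicit Defensive.
Import Order.TTheory GRing.Theory Num.Theory.
Local Open Scope classical_set_scope.
Local Open Scope ring_scope.
Local Open Scope ereal_scope.

(* Gains from trade of posted price p when B, S are i.i.d. with density f:
   GFT(p,F) = E[(B - S) 1_{B >= p > S}]
            = \int_b \int_s (b - s) 1_{b >= p > s} f(b) f(s) ds db. *)
Definition GFT (R : realType) (f : R -> R) (p : R) : \bar R :=
  \int[@lebesgue_measure R]_b \int[@lebesgue_measure R]_s
     (if ((p <= b) && (s < p))%R then ((b - s) * f b * f s)%R else 0%R)%:E.

Definition OPT_GFT (R : realType) (f : R -> R) : \bar R :=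
  \int[@lebesgue_measure R]_b \int[@lebesgue_measure R]_s
     (if (s < b)%R then ((b - s) * f b * f s)%R else 0%R)%:E.

Definition expected_random_price_GFT (R : realType) (f : R -> R) : \bar R :=
  \int[@lebesgue_measure R]_p (GFT f p * (f p)%:E).

(* Main.v *)
Require Import Defs.
From mathcomp Require Import all_boot all_order all_algebra.
From mathcomp Require Import all_classical all_reals all_analysis.
From mathcomp Require Import measurable_realfun lra ring.
Set Implicit Arguments. Unset Strict Implicit.
Import Order.TTheory GRing.Theory Num.Theory.
Local Open Scope classical_set_scope.
Local Open Scope ring_scope.
Local Open Scope ereal_scope.

Definition K3 (R : realType) (h : R -> R -> R -> \bar R) : \bar R :=
  \int[@lebesgue_measure R]_x \int[@lebesgue_measure R]_y
    \int[@lebesgue_measure R]_z h x y z.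

Definition M3 (R : realType) (h : R -> R -> R -> \bar R) : Prop :=
  measurable_fun setT (fun w : (R * R) * R => h w.1.1 w.1.2 w.2).

Lemma M3_inner (R : realType) (h : R -> R -> R -> \bar R) :
  M3 h -> (forall x y z, 0 <= h x y z) -> measurable_fun setT (fun w : R * R =>
     \int[@lebesgue_measure R]_z h w.1 w.2 z).
Proof.
move=> mh h0.
exact: (@measurable_fun_fubini_tonelli_F _ _ _ _ _ (@lebesgue_measure R) (fun w : (R * R) * R => h w.1.1 w.1.2 w.2) mh (fun w => h0 _ _ _)).
Qed.

Lemma M3_z (R : realType) (h : R -> R -> R -> \bar R) x y :
  M3 h -> measurable_fun setT (h x y).
Proof.
move=> mh.
exact: (measurableT_comp mh (pair1_measurable (x, y))).
Qed.

Lemma M3_yz (R : realType) (h : R -> R -> R -> \bar R) x :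
  M3 h -> measurable_fun setT (fun w : R * R => h x w.1 w.2).
Proof.
move=> mh.
apply: (measurableT_comp (g := fun w : R * R => ((x, w.1), w.2)) mh).
apply: measurable_fun_pair => /=.
  apply: measurable_fun_pair => //=; exact: measurable_fst.
exact: measurable_snd.
Qed.

Lemma M3_y (R : realType) (h : R -> R -> R -> \bar R) x :
  M3 h -> (forall x y z, 0 <= h x y z) -> measurable_fun setT (fun y => \int[@lebesgue_measure R]_z h x y z).
Proof.
move=> mh h0.
exact: (measurableT_comp (M3_inner mh h0) (pair1_measurable x)).
Qed.

Lemma M3_x (R : realType) (h : R -> R -> R -> \bar R) :
  M3 h -> (forall x y z, 0 <= h x y z) ->
  measurable_fun setT (fun x => \int[@lebesgue_measure R]_y
     \int[@lebesgue_measure R]_z h x y z).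
Proof.
move=> mh h0.
exact: (@measurable_fun_fubini_tonelli_F _ _ _ _ _ (@lebesgue_measure R) (fun w : R * R =>
     \int[@lebesgue_measure R]_z h w.1 w.2 z) (M3_inner mh h0)
     (fun w => integral_ge0 _ (fun z _ => h0 _ _ _))).
Qed.

Lemma M3_swap12 (R : realType) (h : R -> R -> R -> \bar R) :
  M3 h -> M3 (fun x y z => h y x z).
Proof.
move=> mh.
apply: (measurableT_comp (g := fun w : (R * R) * R => ((w.1.2, w.1.1), w.2)) mh).
apply: measurable_fun_pair => /=.
  apply: measurable_fun_pair => /=.
    exact: (measurableT_comp measurable_snd measurable_fst).
  exact: (measurableT_comp measurable_fst measurable_fst).
exact: measurable_snd.
Qed.

Lemma M3_swap23 (R : realType) (h : R -> R -> R -> \bar R) :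
  M3 h -> M3 (fun x y z => h x z y).
Proof.
move=> mh.
apply: (measurableT_comp (g := fun w : (R * R) * R => ((w.1.1, w.2), w.1.2)) mh).
apply: measurable_fun_pair => /=.
  apply: measurable_fun_pair => /=.
    exact: (measurableT_comp measurable_fst measurable_fst).
  exact: measurable_snd.
exact: (measurableT_comp measurable_snd measurable_fst).
Qed.

Lemma K3_swap12 (R : realType) (h : R -> R -> R -> \bar R) :
  M3 h -> (forall x y z, 0 <= h x y z) ->
  K3 h = K3 (fun x y z => h y x z).
Proof.
move=> mh h0.
exact: (@fubini_tonelli _ _ _ _ _ (@lebesgue_measure R) (@lebesgue_measure R)
  (fun w : R * R => \int[@lebesgue_measure R]_z h w.1 w.2 z) (M3_inner mh h0)
  (fun w => integral_ge0 _ (fun z _ => h0 _ _ _))).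
Qed.

Lemma K3_swap23 (R : realType) (h : R -> R -> R -> \bar R) :
  M3 h -> (forall x y z, 0 <= h x y z) ->
  K3 h = K3 (fun x y z => h x z y).
Proof.
move=> mh h0.
rewrite /K3; apply: eq_integral => x _.
exact: (@fubini_tonelli _ _ _ _ _ (@lebesgue_measure R) (@lebesgue_measure R)
  (fun w : R * R => h x w.1 w.2) (M3_yz x mh) (fun w => h0 _ _ _)).
Qed.

Lemma M3_add (R : realType) (h1 h2 : R -> R -> R -> \bar R) :
  M3 h1 -> M3 h2 -> M3 (fun x y z => h1 x y z + h2 x y z).
Proof. by move=> m1 m2; exact: emeasurable_funD. Qed.

Lemma K3_add (R : realType) (h1 h2 : R -> R -> R -> \bar R) :
  M3 h1 -> M3 h2 -> (forall x y z, 0 <= h1 x y z) -> (forall x y z, 0 <= h2 x y z) ->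
  K3 (fun x y z => h1 x y z + h2 x y z) = K3 h1 + K3 h2.
Proof.
move=> m1 m2 p1 p2; rewrite /K3.
rewrite -ge0_integralD//; last 4 first.
- by move=> x _; apply: integral_ge0 => y _; apply: integral_ge0.
- exact: M3_x.
- by move=> x _; apply: integral_ge0 => y _; apply: integral_ge0.
- exact: M3_x.
apply: eq_integral => x _.
rewrite -ge0_integralD//; last 4 first.
- by move=> y _; apply: integral_ge0.
- exact: M3_y.
- by move=> y _; apply: integral_ge0.
- exact: M3_y.
apply: eq_integral => y _.
rewrite ge0_integralD//; exact: M3_z.
Qed.

Lemma K3_ext (R : realType) (h1 h2 : R -> R -> R -> \bar R) :
  (forall x y, \int[@lebesgue_measure R]_z h1 x y z = \int[@lebesgue_measure R]_z h2 x y z) ->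
  K3 h1 = K3 h2.
Proof.
by move=> H; rewrite /K3; apply: eq_integral => x _; apply: eq_integral => y _.
Qed.

Lemma int_pt (R : realType) (g1 g2 : R -> \bar R) (a : R) :
  measurable_fun setT g1 -> measurable_fun setT g2 ->
  (forall z, z != a -> g1 z = g2 z) ->
  \int[@lebesgue_measure R]_z g1 z = \int[@lebesgue_measure R]_z g2 z.
Proof.
move=> m1 m2 H.
have mD : measurable ([set: R] `\ a) by apply: measurableD.
rewrite -(@integral_setD1 _ g1 a setT)//; last exact: measurable_funS m1.
rewrite -(@integral_setD1 _ g2 a setT)//; last exact: measurable_funS m2.
apply: eq_integral => z; rewrite inE => -[_ /eqP za]; exact: H.
Qed.

Lemma mp1 (R : realType) : measurable_fun setT (fun w : (R * R) * R => w.1.1).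
Proof. exact: (measurableT_comp measurable_fst measurable_fst). Qed.
Lemma mp2 (R : realType) : measurable_fun setT (fun w : (R * R) * R => w.1.2).
Proof. exact: (measurableT_comp measurable_snd measurable_fst). Qed.
Lemma mp3 (R : realType) : measurable_fun setT (fun w : (R * R) * R => w.2).
Proof. exact: measurable_snd. Qed.

Ltac mtac fm := rewrite /M3; apply/measurable_EFinP;
  repeat first [ apply: measurable_fun_ifT | apply: measurable_funM
   | apply: measurable_funB | apply: measurable_and | apply: measurable_fun_ltr
   | apply: measurable_fun_ler | exact: measurable_cst | exact: mp1 | exact: mp2 | exact: mp3
   | (apply: (measurableT_comp fm); first [exact: mp1 | exact: mp2 | exact: mp3]) ].


Lemma pw1 (R : realType) (f : R -> R) (x y z : R) :
  ((if (z <= x) && (y < z) then (x - y) * f x * f y else 0) * f z)%:E =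
  ((if (y < z) && (z <= x) then (x - z) * f x * f y else 0) * f z)%:E +
  ((if (y < z) && (z <= x) then (z - y) * f x * f y else 0) * f z)%:E.
Proof.
rewrite -EFinD; congr EFin.
have [?|?] := lerP z x; have [?|?] := ltrP y z; rewrite /= ?mul0r ?add0r ?addr0 //.
ring.
Qed.

Lemma pwO (R : realType) (f : R -> R) (x y z : R) :
 ((if y < x then (x - y) * f x * f y else 0) * f z)%:E =
 ((if (y < x) && (z < y) then (x - y) * f x * f y else 0) * f z)%:E +
 ((if (y < x) && (y <= z) && (z < x) then (x - y) * f x * f y else 0) * f z)%:E +
 ((if (y < x) && (x <= z) then (x - y) * f x * f y else 0) * f z)%:E.
Proof.
rewrite -!EFinD; congr EFin.
have [?|?] := ltrP y x; have [?|?] := ltrP z y; have [?|?] := ltrP z x; rewrite /= ?mul0r ?add0r ?addr0 //; try (exfalso; lra).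
Qed.

Lemma pwA2 (R : realType) (f : R -> R) (x y z : R) : z != y ->
  ((if (y < x) && (y <= z) && (z < x) then (x - y) * f x * f y else 0) * f z)%:E =
  ((if (y < z) && (z < x) then (x - y) * f x * f y else 0) * f z)%:E.
Proof.
move=> zy; congr EFin.
have [?|?|?] := ltgtP z y; [| |by move: zy; rewrite (_ : z = y) ?eqxx].
  by have [?|?] := ltrP z x; rewrite /= ?andbF ?andbT ?mul0r.
have [?|?] := ltrP z x; rewrite /= ?andbF ?andbT ?mul0r //.
by have -> : (y < x)%R by lra.
Qed.

Lemma pwmid (R : realType) (f : R -> R) (x y z : R) : z != x ->
  ((if (y < z) && (z < x) then (x - y) * f x * f y else 0) * f z)%:E =
  ((if (z <= x) && (y < z) then (x - y) * f x * f y else 0) * f z)%:E.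
Proof.
move=> zx; congr EFin.
have [?|?|?] := ltgtP z x; [| |by move: zx; rewrite (_ : z = x) ?eqxx].
  by rewrite andbC.
by rewrite /= ?andbF.
Qed.

Lemma pwA1 (R : realType) (f : R -> R) (x y z : R) :
  ((if (z < x) && (y < z) then (x - z) * f x * f z else 0) * f y)%:E =
  ((if (y < z) && (z <= x) then (x - z) * f x * f y else 0) * f z)%:E.
Proof.
congr EFin.
have [?|?|?] := ltgtP z x; have [?|?] := ltrP y z; rewrite /= ?mul0r //; try ring.
by match goal with H : z = x |- _ => rewrite H subrr !mul0r end.
Qed.

Lemma pwA3 (R : realType) (f : R -> R) (x y z : R) :
  ((if (y < z) && (z <= x) then (z - y) * f z * f y else 0) * f x)%:E =
  ((if (y < z) && (z <= x) then (z - y) * f x * f y else 0) * f z)%:E.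
Proof.
congr EFin.
have [?|?] := lerP z x; have [?|?] := ltrP y z; rewrite /= ?mul0r //; ring.
Qed.

Ltac pge f0 :=
  repeat match goal with H : is_true (_ && _) |- _ => case/andP: H => ? ? end;
  repeat apply: mulr_ge0; first [exact: f0 | exact: ler01 | (rewrite subr_ge0; lra) | lra].
Ltac ptac f0 :=
  move=> ? ? ?; rewrite lee_fin; case: ifPn => [H|_]; [pge f0 | by rewrite ?mul0r].

Lemma OPT_K3 (R : realType) (f : R -> R) (fm : measurable_fun setT f)
  (f0 : forall x, (0 <= f x)%R)
  (ft : \int[@lebesgue_measure R]_x (f x)%:E = 1) :
  OPT_GFT f = K3 (fun x y z => ((if y < x then (x - y) * f x * f y else 0) * f z)%:E).
Proof.
rewrite /OPT_GFT /K3; apply: eq_integral => x _; apply: eq_integral => y _.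
under [RHS]eq_integral do rewrite EFinM.
rewrite ge0_integralZl//.
- by rewrite ft mule1.
- exact/measurable_EFinP.
- by move=> z _; rewrite lee_fin.
- rewrite lee_fin; case: ifPn => // H; pge f0.
Qed.

Lemma E_K3 (R : realType) (f : R -> R) (fm : measurable_fun setT f)
  (f0 : forall x, (0 <= f x)%R) :
  expected_random_price_GFT f = K3 (fun x y z =>
     ((if (x <= y) && (z < x) then (y - z) * f y * f z else 0) * f x)%:E).
Proof.
rewrite /expected_random_price_GFT /GFT /K3; apply: eq_integral => p _.
rewrite -ge0_integralZr//; last 3 first.
- pose h := fun (_ : R) (y z : R) =>
     ((if (p <= y) && (z < p) then (y - z) * f y * f z else 0) * 1)%:E.
  have mh : M3 h by mtac fm.
  have h0 : forall x y z, 0 <= h x y z.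
    rewrite /h; ptac f0.
  have := M3_y p mh h0.
  apply: eq_measurable_fun => b _; apply: eq_integral => s _; rewrite /h mulr1 //.
- by move=> b _; apply: integral_ge0 => s _; rewrite lee_fin; case: ifPn => // H; pge f0.
- by rewrite lee_fin.
apply: eq_integral => b _.
rewrite -ge0_integralZr//; last 3 first.
- apply/measurable_EFinP; apply: measurable_fun_ifT.
  + apply: measurable_and; [exact: measurable_cst|].
    apply: measurable_fun_ltr => //; exact: measurable_cst.
  + apply: measurable_funM => //; apply: measurable_funM => //; exact: measurable_funB.
  + exact: measurable_cst.
- by move=> s _; rewrite lee_fin; case: ifPn => // H; pge f0.
- by rewrite lee_fin.
Qed.

Unset Implicit Arguments.

Theorem theorem1 (R : realType) (F f : R -> R)
  (f_meas : measurable_fun setT f)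
  (f_ge0 : forall x, (0 <= f x)%R)
  (f_supp : forall x, (x < 0)%R -> f x = 0%R)
  (F_cdf : forall t, \int[@lebesgue_measure R]_(x in `]-oo, t]) (f x)%:E = (F t)%:E)
  (f_total : \int[@lebesgue_measure R]_x (f x)%:E = 1)
  (f_mean : \int[@lebesgue_measure R]_x (x * f x)%:E < +oo)
  (opt_pos : 0 < OPT_GFT f) :
  expected_random_price_GFT f = (2^-1)%:E * OPT_GFT f.
Proof.
rewrite (E_K3 f_meas f_ge0) (OPT_K3 f_meas f_ge0 f_total).
pose hE := fun x y z : R =>
  ((if (x <= y) && (z < x) then (y - z) * f y * f z else 0) * f x)%:E.
pose hE' := fun x y z : R =>
  ((if (z <= x) && (y < z) then (x - y) * f x * f y else 0) * f z)%:E.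
pose B1 := fun x y z : R =>
  ((if (y < z) && (z <= x) then (x - z) * f x * f y else 0) * f z)%:E.
pose B2 := fun x y z : R =>
  ((if (y < z) && (z <= x) then (z - y) * f x * f y else 0) * f z)%:E.
pose hO := fun x y z : R =>
  ((if y < x then (x - y) * f x * f y else 0) * f z)%:E.
pose A1 := fun x y z : R =>
  ((if (y < x) && (z < y) then (x - y) * f x * f y else 0) * f z)%:E.
pose A2 := fun x y z : R =>
  ((if (y < x) && (y <= z) && (z < x) then (x - y) * f x * f y else 0) * f z)%:E.
pose A3 := fun x y z : R =>
  ((if (y < x) && (x <= z) then (x - y) * f x * f y else 0) * f z)%:E.
pose mid := fun x y z : R =>
  ((if (y < z) && (z < x) then (x - y) * f x * f y else 0) * f z)%:E.
have mE : M3 hE by rewrite /hE; mtac f_meas.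
have mE' : M3 hE' by rewrite /hE'; mtac f_meas.
have mB1 : M3 B1 by rewrite /B1; mtac f_meas.
have mB2 : M3 B2 by rewrite /B2; mtac f_meas.
have mA1 : M3 A1 by rewrite /A1; mtac f_meas.
have mA2 : M3 A2 by rewrite /A2; mtac f_meas.
have mA3 : M3 A3 by rewrite /A3; mtac f_meas.
have mmid : M3 mid by rewrite /mid; mtac f_meas.
have pE : forall x y z, 0 <= hE x y z by rewrite /hE; ptac f_ge0.
have pB1 : forall x y z, 0 <= B1 x y z by rewrite /B1; ptac f_ge0.
have pB2 : forall x y z, 0 <= B2 x y z by rewrite /B2; ptac f_ge0.
have pA1 : forall x y z, 0 <= A1 x y z by rewrite /A1; ptac f_ge0.
have pA2 : forall x y z, 0 <= A2 x y z by rewrite /A2; ptac f_ge0.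
have pA3 : forall x y z, 0 <= A3 x y z by rewrite /A3; ptac f_ge0.
have eE : K3 hE = K3 hE'.
  by rewrite (K3_swap12 mE pE) (K3_swap23 (M3_swap12 mE) (fun x y z => pE y x z)).
have eEs : K3 hE' = K3 B1 + K3 B2.
  rewrite -(K3_add mB1 mB2 pB1 pB2).
  apply: K3_ext => x y; apply: eq_integral => z _; exact: pw1.
have eO : K3 hO = K3 A1 + K3 A2 + K3 A3.
  have m12 : M3 (fun x y z => A1 x y z + A2 x y z) by exact: M3_add.
  have p12 : forall x y z, 0 <= A1 x y z + A2 x y z by move=> x y z; apply: adde_ge0.
  rewrite -(K3_add mA1 mA2 pA1 pA2) -(K3_add m12 mA3 p12 pA3).
  apply: K3_ext => x y; apply: eq_integral => z _; exact: pwO.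
have e2 : K3 A2 = K3 hE'.
  apply: K3_ext => x y.
  transitivity (\int[@lebesgue_measure R]_z mid x y z).
    apply: (int_pt (a := y)); [exact: M3_z|exact: M3_z|].
    move=> z zy; exact: pwA2.
  apply: (int_pt (a := x)); [exact: M3_z|exact: M3_z|].
  move=> z zx; exact: pwmid.
have e1 : K3 A1 = K3 B1.
  rewrite (K3_swap23 mA1 pA1).
  apply: K3_ext => x y; apply: eq_integral => z _; exact: pwA1.
have e3 : K3 A3 = K3 B2.
  rewrite (K3_swap12 mA3 pA3).
  rewrite (K3_swap23 (M3_swap12 mA3) (fun x y z => pA3 y x z)).
  rewrite (K3_swap12 (M3_swap23 (M3_swap12 mA3)) (fun x y z => pA3 z x y)).
  apply: K3_ext => x y; apply: eq_integral => z _; exact: pwA3.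
have -> : K3 hO = K3 hE + K3 hE.
  by rewrite eO e1 e2 e3 eE eEs addeAC.
have : 0 <= K3 hE by apply: integral_ge0 => x _; apply: integral_ge0 => y _; apply: integral_ge0.
case: (K3 hE) => [r|_|//].
  by rewrite lee_fin => _; rewrite -EFinD -EFinM; congr EFin; field.
have -> : (+oo + +oo = +oo :> \bar R)%E by [].
by rewrite mulry gtr0_sg ?mul1e // invr_gt0 ltr0n.
Qed.
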